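(* Let $X$ and $Y$ be join semilattices. Then $(X,Y)$ is a Morita pair between some m-regular m-semilattices if and only if there exist surjective join semilattice morphisms $p: X\otimes Y\otimes X\to X$ and $q: Y\otimes X\otimes Y\to Y$ such that, for all $x_1,x_2,x_3\in X$ and $y_1,y_2,y_3\in Y$: 1. $p(p(x_1\otimes y_1\otimes x_2)\otimes y_2\otimes x_3)=p(x_1\otimes q(y_1\otimes x_2\otimes y_2)\otimes x_3)=p(x_1\otimes y_1\otimes p(x_2\otimes y_2\otimes x_3))$; 2. $q(q(y_1\otimes x_1\otimes y_2)\otimes x_2\otimes y_3)=q(y_1\otimes p(x_1\otimes y_2\otimes x_2)\otimes y_3)=q(y_1\otimes x_1\otimes q(y_2\otimes x_2\otimes y_3))$; 3. if $p(u\otimes v\otimes x_1)=p(u\otimes v\otimes x_2)$ for all $u\in X$, $v\in Y$, then $x_1=x_2$; 4. if $p(x_1\otimes v\otimes u)=p(x_2\otimes v\otimes u)$ for all $u\in X$, $v\in Y$, then $x_1=x_2$; 5. if $q(v\otimes u\otimes y_1)=q(v\otimes u\otimes y_2)$ for all $v\in Y$, $u\in X$, then $y_1=y_2$; 6. if $q(y_1\otimes u\otimes v)=q(y_2\otimes u\otimes v)$ for all $u\in X$, $v\in Y$, then $y_1=y_2$.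
   Context: A join semilattice is a poset with all finite joins (including the empty join $0$); morphisms preserve finite joins. $\otimes$ denotes the tensor product of join semilattices (universal for maps preserving finite joins in each variable). An m-semilattice is a join semilattice with an associative multiplication distributing over finite joins on both sides. Modules over an m-semilattice $A$ are join semilattices $M$ with an action $M\times A\to M$ satisfying $m\cdot(ab)=(m\cdot a)\cdot b$ and preserving finite joins in each variable (left modules dually). A right module is essential if every element is a finite join of elements $m\cdot a$, separated if ($m\cdot a=n\cdot a$ for all $a$) implies $m=n$, m-regular if both; dually on the left; an m-regular $A,B$-bimodule is an m-regular left $A$-module and m-regular right $B$-module with commuting actions; an m-semilattice is m-regular if it is m-regular as a bimodule over itself. A Morita context between m-regular m-semilattices $A,B$ is $(A,B,X,Y,(-,-),[-,-])$ with $X$ an m-regular $A,B$-bimodule, $Y$ an m-regular $B,A$-bimodule, and bimodule maps $(-,-):X\times Y\to A$, $[-,-]:Y\times X\to B$ satisfying $(x\cdot b,y)=(x,b\cdot y)$, $[y\cdot a,x]=[y,a\cdot x]$, $(x_1,y)\cdot x_2=x_1\cdot[y,x_2]$, $[y_1,x]\cdot y_2=y_1\cdot(x,y_2)$, with the induced maps $X\otimes Y\to A$, $Y\otimes X\to B$ surjective; $(X,Y)$ is then a Morita pair. *)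

(* Defs.v *)
From HB Require Import structures.
From mathcomp Require Import all_boot all_order.
Unset Printing Implicit Defensive.
Import Order.LTheory.
Local Open Scope order_scope.

(* A join semilattice (with all finite joins, including the empty join 0)
   is a mathcomp [bJoinSemilatticeType d]: join [`|`], bottom [\bot]. *)

Definition fjoin {d : Order.disp_t} {T : bJoinSemilatticeType d} {I : Type}
  (s : seq I) (F : I -> T) : T :=
  \big[Order.join/Order.bottom]_(i <- s) F i.

Definition join_generated {d : Order.disp_t} {T : bJoinSemilatticeType d}
  {I : Type} (F : I -> T) : Prop :=
  forall t : T, exists s : seq I, t = fjoin s F.

Definition jmor {d1 d2 : Order.disp_t} {S : bJoinSemilatticeType d1}
  {T : bJoinSemilatticeType d2} (f : S -> T) : Prop :=
  f \bot = \bot /\ forall a b, f (a `|` b) = f a `|` f b.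

Definition bimor {d1 d2 d3 : Order.disp_t} {S1 : bJoinSemilatticeType d1}
  {S2 : bJoinSemilatticeType d2} {T : bJoinSemilatticeType d3}
  (f : S1 -> S2 -> T) : Prop :=
  (forall y, jmor (fun x => f x y)) /\ (forall x, jmor (f x)).

(* Preserving finite joins in each of three variables; such maps are exactly
   the join semilattice morphisms S1 (x) S2 (x) S3 -> T (universal property). *)
Definition trimor {d1 d2 d3 d4 : Order.disp_t} {S1 : bJoinSemilatticeType d1}
  {S2 : bJoinSemilatticeType d2} {S3 : bJoinSemilatticeType d3}
  {T : bJoinSemilatticeType d4} (f : S1 -> S2 -> S3 -> T) : Prop :=
  (forall y z, jmor (fun x => f x y z)) /\ (forall x z, jmor (fun y => f x y z))
  /\ (forall x y, jmor (f x y)).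

Definition m_semilattice {d : Order.disp_t} (A : bJoinSemilatticeType d)
  (mul : A -> A -> A) : Prop :=
  (forall a b c, mul a (mul b c) = mul (mul a b) c) /\ bimor mul.

Definition right_module {d e : Order.disp_t} (A : bJoinSemilatticeType d)
  (mul : A -> A -> A) (M : bJoinSemilatticeType e) (act : M -> A -> M) : Prop :=
  bimor act /\ forall m a b, act m (mul a b) = act (act m a) b.

Definition left_module {d e : Order.disp_t} (A : bJoinSemilatticeType d)
  (mul : A -> A -> A) (M : bJoinSemilatticeType e) (act : A -> M -> M) : Prop :=
  bimor act /\ forall a b m, act (mul a b) m = act a (act b m).

Definition m_regular_right {d e : Order.disp_t} (A : bJoinSemilatticeType d)
  (mul : A -> A -> A) (M : bJoinSemilatticeType e) (act : M -> A -> M) : Prop :=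
  [/\ right_module A mul M act,
      join_generated (fun p : M * A => act p.1 p.2) &
      forall m n : M, (forall a, act m a = act n a) -> m = n].

Definition m_regular_left {d e : Order.disp_t} (A : bJoinSemilatticeType d)
  (mul : A -> A -> A) (M : bJoinSemilatticeType e) (act : A -> M -> M) : Prop :=
  [/\ left_module A mul M act,
      join_generated (fun p : A * M => act p.1 p.2) &
      forall m n : M, (forall a, act a m = act a n) -> m = n].

Definition m_regular_bimodule {dA dB e : Order.disp_t}
  (A : bJoinSemilatticeType dA) (mulA : A -> A -> A)
  (B : bJoinSemilatticeType dB) (mulB : B -> B -> B)
  (M : bJoinSemilatticeType e) (lact : A -> M -> M) (ract : M -> B -> M) : Prop :=
  [/\ m_regular_left A mulA M lact, m_regular_right B mulB M ract &
      forall a m b, ract (lact a m) b = lact a (ract m b)].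

Definition m_regular_msemilattice {d : Order.disp_t} (A : bJoinSemilatticeType d)
  (mul : A -> A -> A) : Prop :=
  m_semilattice A mul /\ m_regular_bimodule A mul A mul A mul mul.

Definition morita_context {dA dB dX dY : Order.disp_t}
  (A : bJoinSemilatticeType dA) (mulA : A -> A -> A)
  (B : bJoinSemilatticeType dB) (mulB : B -> B -> B)
  (X : bJoinSemilatticeType dX) (lX : A -> X -> X) (rX : X -> B -> X)
  (Y : bJoinSemilatticeType dY) (lY : B -> Y -> Y) (rY : Y -> A -> Y)
  (pr : X -> Y -> A) (br : Y -> X -> B) : Prop :=
  [/\ m_regular_msemilattice A mulA, m_regular_msemilattice B mulB,
      m_regular_bimodule A mulA B mulB X lX rX,
      m_regular_bimodule B mulB A mulA Y lY rY &
  [/\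
      bimor pr /\ (forall a x y, pr (lX a x) y = mulA a (pr x y))
               /\ (forall x y a, pr x (rY y a) = mulA (pr x y) a),
      bimor br /\ (forall b y x, br (lY b y) x = mulB b (br y x))
               /\ (forall y x b, br y (rX x b) = mulB (br y x) b),
      (forall x b y, pr (rX x b) y = pr x (lY b y))
        /\ (forall y a x, br (rY y a) x = br y (lX a x)),
      (forall x1 y x2, rX x1 (br y x2) = lX (pr x1 y) x2)
        /\ (forall y1 x y2, rY y1 (pr x y2) = lY (br y1 x) y2) &
      (* the induced maps X (x) Y -> A and Y (x) X -> B are surjective,
         i.e. their images (finite joins of the values) are everything *)
      join_generated (fun p : X * Y => pr p.1 p.2)
        /\ join_generated (fun p : Y * X => br p.1 p.2)]].

Definition morita_pair {dX dY : Order.disp_t}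
  (X : bJoinSemilatticeType dX) (Y : bJoinSemilatticeType dY) : Prop :=
  exists (dA : Order.disp_t) (A : bJoinSemilatticeType dA) (mulA : A -> A -> A)
         (dB : Order.disp_t) (B : bJoinSemilatticeType dB) (mulB : B -> B -> B)
         (lX : A -> X -> X) (rX : X -> B -> X)
         (lY : B -> Y -> Y) (rY : Y -> A -> Y)
         (pr : X -> Y -> A) (br : Y -> X -> B),
    morita_context A mulA B mulB X lX rX Y lY rY pr br.

(* Main.v *)
From HB Require Import structures.
From mathcomp Require Import all_boot all_order.
From mathcomp Require Import boolp.
Require Import Defs.
Import Order.LTheory.
Local Open Scope order_scope.

Section Gen.
Context {d e : Order.disp_t} {S : bJoinSemilatticeType d} {T : bJoinSemilatticeType e}.

Lemma fjoin_nil {I} (F : I -> S) : fjoin [::] F = \bot.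
Proof. by rewrite /fjoin big_nil. Qed.
Lemma fjoin_cons {I} (i : I) s (F : I -> S) : fjoin (i :: s) F = F i `|` fjoin s F.
Proof. by rewrite /fjoin big_cons. Qed.
Lemma fjoin_cat {I} s1 s2 (F : I -> S) : fjoin (s1 ++ s2) F = fjoin s1 F `|` fjoin s2 F.
Proof. by rewrite /fjoin big_cat. Qed.

Lemma jmor_fjoin (f : S -> T) {I} (s : seq I) F :
  jmor f -> f (fjoin s F) = fjoin s (fun i => f (F i)).
Proof. by move=> [f0 fU]; rewrite /fjoin (big_morph f fU f0). Qed.

Lemma jmor_comp {f' : Order.disp_t} {U : bJoinSemilatticeType f'} (f : T -> U) (g : S -> T) :
  jmor f -> jmor g -> jmor (fun x => f (g x)).
Proof. by move=> [f0 fU] [g0 gU]; split => [|a b]; rewrite ?g0 ?f0 ?gU ?fU. Qed.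

Lemma gen_trans {I J} (G : I -> S) (F : J -> S) :
  join_generated G -> (forall i, exists s, G i = fjoin s F) -> join_generated F.
Proof.
move=> gG H t; have [s ->] := gG t; elim: s => [|i s [s' IH]].
  by exists [::]; rewrite !fjoin_nil.
have [s1 E1] := H i; exists (s1 ++ s'); by rewrite fjoin_cons fjoin_cat E1 IH.
Qed.

Lemma gen_ext {I} (G : I -> S) (f g : S -> T) :
  join_generated G -> jmor f -> jmor g -> (forall i, f (G i) = g (G i)) ->
  forall a, f a = g a.
Proof.
move=> gG jf jg H a; have [s ->] := gG a.
rewrite (jmor_fjoin _ _ _ jf) (jmor_fjoin _ _ _ jg); rewrite /fjoin.
by apply: eq_bigr => i _.
Qed.
End Gen.

Section FS.
Context {d : Order.disp_t} {T : Type} {L : bJoinSemilatticeType d}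
  {I : Type} (G : I -> T -> L).

Definition spn (s : seq I) : T -> L :=
  fun t => \big[Order.join/Order.bottom]_(i <- s) G i t.
Definition inspan (f : T -> L) : Prop := exists s, f = spn s.
Lemma inspan0 : inspan (fun _ => \bot).
Proof. by exists [::]; apply: funext => t; rewrite /spn big_nil. Qed.
Lemma inspanU f g : inspan f -> inspan g -> inspan (fun t => f t `|` g t).
Proof.
move=> [s ->] [s' ->]; exists (s ++ s'); apply: funext => t.
by rewrite /spn big_cat.
Qed.

Definition FS := {f : T -> L | inspan f}.
HB.instance Definition _ := gen_eqMixin FS.
HB.instance Definition _ := gen_choiceMixin FS.

Lemma FS_eq (f g : FS) : proj1_sig f = proj1_sig g -> f = g.
Proof.
case: f g => f Pf [g Pg] /= E; subst g; congr exist; exact: Prop_irrelevance.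
Qed.

Definition FSle (f g : FS) : bool := `[< forall t, proj1_sig f t <= proj1_sig g t >].

Lemma FSle_refl : reflexive FSle.
Proof. by move=> f; apply/asboolP => t. Qed.
Lemma FSle_anti : antisymmetric FSle.
Proof.
move=> f g /andP[/asboolP H1 /asboolP H2]; apply: FS_eq; apply: funext => t.
by apply: le_anti; rewrite H1 H2.
Qed.
Lemma FSle_trans : transitive FSle.
Proof.
move=> g f h /asboolP H1 /asboolP H2; apply/asboolP => t; exact: le_trans (H1 t) (H2 t).
Qed.

HB.instance Definition _ := Order.Le_isPOrder.Build d FS FSle_refl FSle_anti FSle_trans.

Definition FSjoin (f g : FS) : FS :=
  exist inspan (fun t => proj1_sig f t `|` proj1_sig g t)
    (@inspanU _ _ (proj2_sig f) (proj2_sig g)).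

Lemma FSleUx (x y z : FS) : (FSjoin x y <= z) = (x <= z) && (y <= z).
Proof.
apply/asboolP/andP => [H|[/asboolP H1 /asboolP H2]].
  by split; apply/asboolP => t; have := H t; rewrite /= leUx => /andP[].
by move=> t /=; rewrite leUx H1 H2.
Qed.

HB.instance Definition _ := @Order.POrder_isJoinSemilattice.Build d FS FSjoin FSleUx.

Definition FSbot : FS := exist inspan (fun _ => \bot) inspan0.
Lemma FSle0x (x : FS) : FSbot <= x.
Proof. by apply/asboolP => t /=; exact: le0x. Qed.
HB.instance Definition _ := @Order.hasBottom.Build d FS FSbot FSle0x.

Lemma FS_valU (f g : FS) :
  proj1_sig (f `|` g) = (fun t => proj1_sig f t `|` proj1_sig g t).
Proof. by []. Qed.
Lemma FS_val0 : proj1_sig (\bot : FS) = (fun _ => \bot).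
Proof. by []. Qed.

Lemma FS_val_big {J} (s : seq J) (F : J -> FS) :
  proj1_sig (\big[Order.join/Order.bottom]_(j <- s) F j) =
  fun t => \big[Order.join/Order.bottom]_(j <- s) proj1_sig (F j) t.
Proof.
elim: s => [|j s IH]; apply: funext => t; rewrite ?big_nil ?big_cons //.
by rewrite FS_valU IH.
Qed.

Lemma inspanG i : inspan (G i).
Proof. by exists [:: i]; apply: funext => t; rewrite /spn big_seq1. Qed.

Definition elt (i : I) : FS := exist inspan (G i) (inspanG i).

Lemma FS_gen : join_generated elt.
Proof.
move=> [f [s E]]; exists s; apply: FS_eq.
by rewrite /fjoin FS_val_big /=; rewrite E.
Qed.

Definition rep (f : FS) : seq I := proj1_sig (cid (proj2_sig f)).
Lemma rep_spec (f : FS) : proj1_sig f = spn (rep f).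
Proof. exact: (proj2_sig (cid (proj2_sig f))). Qed.

End FS.
Arguments rep {d T L I G} f.
Arguments rep_spec {d T L I G} f.
Arguments FS_eq {d T L I G} f g.
Arguments FS_valU {d T L I G} f g.
Arguments FS_val0 {d T L I G}.
Arguments FS_val_big {d T L I G J} s F.

Definition FSmul {d : Order.disp_t} {L : bJoinSemilatticeType d} {I : Type}
  {G : I -> L -> L} (a b : FS G) : FS G :=
  match pselect (inspan G (fun u => proj1_sig a (proj1_sig b u))) with
  | left h => exist _ _ h
  | right _ => \bot
  end.

Lemma FSmulE {d : Order.disp_t} {L : bJoinSemilatticeType d} {I : Type}
  (G : I -> L -> L) (a b : FS G) :
  inspan G (fun u => proj1_sig a (proj1_sig b u)) ->
  proj1_sig (FSmul a b) = fun u => proj1_sig a (proj1_sig b u).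
Proof. by rewrite /FSmul => h; case: pselect. Qed.

Lemma FS_jmor {d : Order.disp_t} {L : bJoinSemilatticeType d} {I : Type}
  (G : I -> L -> L) : (forall i, jmor (G i)) -> forall f : FS G, jmor (proj1_sig f).
Proof.
move=> H [f [s E]] /=; rewrite E; split => [|a b] /=; rewrite /spn.
  by apply: big1 => i _; exact: (H i).1.
by rewrite -big_split; apply: eq_bigr => i _; exact: (H i).2.
Qed.

Lemma jmor_big {d e : Order.disp_t} {S : bJoinSemilatticeType d} {T : bJoinSemilatticeType e}
  (f : S -> T) {I} (s : seq I) (F : I -> S) : jmor f ->
  f (\big[Order.join/Order.bottom]_(i <- s) F i) =
  \big[Order.join/Order.bottom]_(i <- s) f (F i).
Proof. by move=> [f0 fU]; rewrite (big_morph f fU f0). Qed.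

Section Defs2.
Context {dX dY : Order.disp_t} {X : bJoinSemilatticeType dX} {Y : bJoinSemilatticeType dY}.

Definition GA (p : X -> Y -> X -> X) : X * Y -> X -> X := fun t u => p t.1 t.2 u.
Definition AA (p : X -> Y -> X -> X) : bJoinSemilatticeType dX := FS (GA p).
Definition mulF (p : X -> Y -> X -> X) : AA p -> AA p -> AA p := @FSmul _ _ _ (GA p).
Definition lXF (p : X -> Y -> X -> X) (a : AA p) (x : X) : X := proj1_sig a x.
Definition prF (p : X -> Y -> X -> X) (x : X) (y : Y) : AA p := elt (GA p) (x, y).

End Defs2.

Definition rXF {dX dY : Order.disp_t} {X : bJoinSemilatticeType dX} {Y : bJoinSemilatticeType dY}
  (p : X -> Y -> X -> X) (q : Y -> X -> Y -> Y) (x : X) (b : AA q) : X :=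
  \big[Order.join/Order.bottom]_(t <- rep b) p x t.1 t.2.

Definition Hyps {dX dY : Order.disp_t} {X : bJoinSemilatticeType dX} {Y : bJoinSemilatticeType dY} (p : X -> Y -> X -> X) (q : Y -> X -> Y -> Y) : Prop :=
 [/\ trimor p /\ trimor q,
     join_generated (fun t : X * Y * X => p t.1.1 t.1.2 t.2)
       /\ join_generated (fun t : Y * X * Y => q t.1.1 t.1.2 t.2),
     (forall (x1 x2 x3 : X) (y1 y2 : Y), p (p x1 y1 x2) y2 x3 = p x1 (q y1 x2 y2) x3)
       /\ (forall (y1 y2 y3 : Y) (x1 x2 : X), q (q y1 x1 y2) x2 y3 = q y1 (p x1 y2 x2) y3),
     (forall (x1 x2 x3 : X) (y1 y2 : Y), p x1 (q y1 x2 y2) x3 = p x1 y1 (p x2 y2 x3))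
       /\ (forall (y1 y2 y3 : Y) (x1 x2 : X), q y1 (p x1 y2 x2) y3 = q y1 x1 (q y2 x2 y3)) &
     [/\ forall x1 x2 : X, (forall (u : X) (v : Y), p u v x1 = p u v x2) -> x1 = x2,
         forall x1 x2 : X, (forall (u : X) (v : Y), p x1 v u = p x2 v u) -> x1 = x2,
         forall y1 y2 : Y, (forall (u : Y) (v : X), q u v y1 = q u v y2) -> y1 = y2 &
         forall y1 y2 : Y, (forall (u : Y) (v : X), q y1 v u = q y2 v u) -> y1 = y2]].

Lemma Hyps_swap {dX dY : Order.disp_t} {X : bJoinSemilatticeType dX}
  {Y : bJoinSemilatticeType dY} (p : X -> Y -> X -> X) (q : Y -> X -> Y -> Y) :
  Hyps p q -> Hyps q p.
Proof.
case=> [[a b] [c d] [e f] [g h] [i j k l]].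
exact: And5 (conj b a) (conj d c) (conj f e) (conj h g) (And4 k l i j).
Qed.

Section Side.
Context {dX dY : Order.disp_t} {X : bJoinSemilatticeType dX} {Y : bJoinSemilatticeType dY}
  {p : X -> Y -> X -> X} {q : Y -> X -> Y -> Y} (H : Hyps p q).

Local Notation A := (AA p).

Lemma tp : trimor p. Proof. by case: H => -[]. Qed.
Lemma gp : join_generated (fun t : X * Y * X => p t.1.1 t.1.2 t.2).
Proof. by case: H => _ [? _]. Qed.
Lemma pq (x1 x2 x3 : X) (y1 y2 : Y) : p (p x1 y1 x2) y2 x3 = p x1 (q y1 x2 y2) x3.
Proof. by case: H => _ _ [h _] _ _; apply: h. Qed.
Lemma pp (x1 x2 x3 : X) (y1 y2 : Y) : p x1 (q y1 x2 y2) x3 = p x1 y1 (p x2 y2 x3).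
Proof. by case: H => _ _ _ [h _] _; apply: h. Qed.
Lemma pA (x1 x2 x3 : X) (y1 y2 : Y) : p (p x1 y1 x2) y2 x3 = p x1 y1 (p x2 y2 x3).
Proof. by rewrite pq pp. Qed.
Lemma s3 : forall x1 x2 : X, (forall (u : X) (v : Y), p u v x1 = p u v x2) -> x1 = x2.
Proof. by case: H => _ _ _ _ [? ? ? ?]. Qed.
Lemma s4 : forall x1 x2 : X, (forall (u : X) (v : Y), p x1 v u = p x2 v u) -> x1 = x2.
Proof. by case: H => _ _ _ _ [? ? ? ?]. Qed.

Lemma p1 y z : jmor (fun x => p x y z). Proof. exact: tp.1. Qed.
Lemma p2 x z : jmor (fun y => p x y z). Proof. exact: tp.2.1. Qed.
Lemma p3 x y : jmor (p x y). Proof. exact: tp.2.2. Qed.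

Lemma p10 y z : p \bot y z = \bot. Proof. exact: (p1 y z).1. Qed.
Lemma p20 x z : p x \bot z = \bot. Proof. exact: (p2 x z).1. Qed.
Lemma p30 x y : p x y \bot = \bot. Proof. exact: (p3 x y).1. Qed.
Lemma p1U x x' y z : p (x `|` x') y z = p x y z `|` p x' y z. Proof. exact: (p1 y z).2. Qed.
Lemma p2U x y y' z : p x (y `|` y') z = p x y z `|` p x y' z. Proof. exact: (p2 x z).2. Qed.
Lemma p3U x y z z' : p x y (z `|` z') = p x y z `|` p x y z'. Proof. exact: (p3 x y).2. Qed.

Lemma pbig1 {I} (s : seq I) F y u :
  p (\big[Order.join/Order.bottom]_(i <- s) F i) y u =
  \big[Order.join/Order.bottom]_(i <- s) p (F i) y u.
Proof. exact: (jmor_big _ _ _ (p1 y u)). Qed.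
Lemma pbig2 {I} (s : seq I) F x u :
  p x (\big[Order.join/Order.bottom]_(i <- s) F i) u =
  \big[Order.join/Order.bottom]_(i <- s) p x (F i) u.
Proof. exact: (jmor_big _ _ _ (p2 x u)). Qed.
Lemma pbig3 {I} (s : seq I) F x y :
  p x y (\big[Order.join/Order.bottom]_(i <- s) F i) =
  \big[Order.join/Order.bottom]_(i <- s) p x y (F i).
Proof. exact: (jmor_big _ _ _ (p3 x y)). Qed.

Lemma jA (a : A) : jmor (proj1_sig a).
Proof. by apply: FS_jmor => i; exact: p3. Qed.

Lemma compA (a b : A) : inspan (GA p) (fun u => proj1_sig a (proj1_sig b u)).
Proof.
rewrite (rep_spec a) (rep_spec b).
exists [seq (p t.1 t.2 t'.1, t'.2) | t <- rep a, t' <- rep b].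
apply: funext => u; rewrite /spn big_allpairs_dep /=.
apply: eq_bigr => t _; rewrite /GA pbig3.
by apply: eq_bigr => t' _ /=; rewrite pA.
Qed.

Lemma mulE (a b : A) : proj1_sig (mulF p a b) = fun u => proj1_sig a (proj1_sig b u).
Proof. exact: (FSmulE _ a b (compA a b)). Qed.

Lemma aP (a : A) w v u : p (proj1_sig a w) v u = proj1_sig a (p w v u).
Proof.
rewrite (rep_spec a) /spn /GA pbig1.
by apply: eq_bigr => t _; rewrite pA.
Qed.

Lemma genA : join_generated (fun t : A * A => mulF p t.1 t.2).
Proof.
apply: (gen_trans _ _ (FS_gen (GA p))) => -[x y].
have [s0 E] := gp x.
exists [seq (prF p t.1.1 t.1.2, prF p t.2 y) | t <- s0].
apply: FS_eq; apply: funext => u; rewrite /fjoin FS_val_big /= big_map.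
rewrite -[LHS]/(p x y u) {1}E /fjoin pbig1.
by apply: eq_bigr => t _; rewrite mulE /= /GA /= pA.
Qed.

Lemma sepL (m n : A) : (forall a, mulF p a m = mulF p a n) -> m = n.
Proof.
move=> Hmn; apply: FS_eq; apply: funext => u; apply: s3 => x y.
have := f_equal (fun f => proj1_sig f u) (Hmn (prF p x y)).
by rewrite !mulE.
Qed.

Lemma sepR (m n : A) : (forall a, mulF p m a = mulF p n a) -> m = n.
Proof.
move=> Hmn; apply: FS_eq; apply: funext => w.
apply: (gen_ext _ (proj1_sig m) (proj1_sig n) gp (jA m) (jA n)) => -[[x y] u] /=.
have := f_equal (fun f => proj1_sig f u) (Hmn (prF p x y)).
by rewrite !mulE.
Qed.

Lemma mulAssoc (a b c : A) : mulF p a (mulF p b c) = mulF p (mulF p a b) c.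
Proof. by apply: FS_eq; rewrite !mulE. Qed.

Lemma mul_bimor : bimor (@mulF _ _ X Y p).
Proof.
split=> [b|a]; split.
- by apply: FS_eq; rewrite mulE.
- by move=> a a'; apply: FS_eq; rewrite mulE !FS_valU !mulE.
- by apply: FS_eq; rewrite mulE; apply: funext => u; exact: (jA a).1.
- move=> b b'; apply: FS_eq; rewrite !FS_valU !mulE FS_valU.
  by apply: funext => u; exact: (jA a).2.
Qed.

Lemma L1 : m_regular_msemilattice A (@mulF _ _ X Y p).
Proof.
split; first by split; [exact: mulAssoc | exact: mul_bimor].
split.
- split; [split; [exact: mul_bimor | by move=> *; rewrite mulAssoc] | exact: genA | exact: sepL].
- split; [split; [exact: mul_bimor | by move=> *; rewrite mulAssoc] | exact: genA | exact: sepR].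
- by move=> *; rewrite mulAssoc.
Qed.

Lemma L6 : join_generated (fun t : X * Y => prF p t.1 t.2).
Proof.
apply: (gen_trans _ _ (FS_gen (GA p))) => -[x y].
by exists [:: (x, y)]; rewrite fjoin_cons fjoin_nil joinx0.
Qed.
End Side.

Section Cross.
Context {dX dY : Order.disp_t} {X : bJoinSemilatticeType dX} {Y : bJoinSemilatticeType dY}
  {p : X -> Y -> X -> X} {q : Y -> X -> Y -> Y} (H : Hyps p q).

Local Notation A := (AA p).
Local Notation B := (AA q).
Let H' := Hyps_swap _ _ H.

Lemma prX x (b : B) v u : p (rXF p q x b) v u = p x (proj1_sig b v) u.
Proof.
rewrite /rXF (pbig1 H) (rep_spec b) /spn (pbig2 H).
by apply: eq_bigr => t _; rewrite (pq H).
Qed.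

Lemma rX_pr x y u : rXF p q x (prF q y u) = p x y u.
Proof. by apply: (s4 H) => u' v'; rewrite prX /= /GA /= (pq H). Qed.

Lemma prY x y (a : A) u : p x (rXF q p y a) u = p x y (proj1_sig a u).
Proof.
rewrite /rXF (pbig2 H) (rep_spec a) /spn /GA (pbig3 H).
by apply: eq_bigr => t _; rewrite (pp H).
Qed.

Lemma L2 : m_regular_bimodule A (mulF p) B (mulF q) X (lXF p) (rXF p q).
Proof.
split.
- split.
  + split; first split.
    * by move=> x; split.
    * by move=> a; exact: (jA H a).
    * by move=> a b m; rewrite /lXF (mulE H).
  + apply: (gen_trans _ _ (gp H)) => -[[x y] u].
    by exists [:: (prF p x y, u)]; rewrite fjoin_cons fjoin_nil joinx0.
  + by move=> m n Hmn; apply: (s3 H) => x y; exact: Hmn (prF p x y).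
- split.
  + split; first split.
    * move=> b; split.
        by rewrite /rXF; apply: big1 => t _; exact: (p10 H).
      move=> x x'; rewrite /rXF -big_split; apply: eq_bigr => t _; exact: (p1U H).
    * move=> x; split.
        by apply: (s4 H) => u v; rewrite prX /= (p20 H) (p10 H).
      move=> b b'; apply: (s4 H) => u v.
      by rewrite (p1U H) !prX FS_valU /= (p2U H).
    * by move=> m b b'; apply: (s4 H) => u v; rewrite !prX (mulE H').
  + apply: (gen_trans _ _ (gp H)) => -[[x y] u].
    by exists [:: (x, prF q y u)]; rewrite fjoin_cons fjoin_nil joinx0 /= rX_pr.
  + by move=> m n Hmn; apply: (s4 H) => u v; rewrite -!rX_pr Hmn.
- by move=> a m b; apply: (s4 H) => u v; rewrite /lXF !prX !(aP H) !prX.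
Qed.

Lemma L3 : bimor (prF p) /\ (forall a x y, prF p (lXF p a x) y = mulF p a (prF p x y))
  /\ (forall x y a, prF p x (rXF q p y a) = mulF p (prF p x y) a).
Proof.
split; first split => [y|x]; split.
- by apply: FS_eq; apply: funext => u; rewrite /= /GA /= (p10 H).
- by move=> x x'; apply: FS_eq; apply: funext => u; rewrite /= /GA /= (p1U H).
- by apply: FS_eq; apply: funext => u; rewrite /= /GA /= (p20 H).
- by move=> y y'; apply: FS_eq; apply: funext => u; rewrite /= /GA /= (p2U H).
- move=> a x y; apply: FS_eq; rewrite (mulE H); apply: funext => u.
  by rewrite /lXF /= /GA /= (aP H).
- move=> x y a; apply: FS_eq; rewrite (mulE H); apply: funext => u.
  by rewrite /= /GA /= prY.
Qed.

Lemma L4 : forall x b y, prF p (rXF p q x b) y = prF p x (lXF q b y).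
Proof. by move=> x b y; apply: FS_eq; apply: funext => u; rewrite /= /GA /= prX. Qed.

Lemma L5 : forall x1 y x2, rXF p q x1 (prF q y x2) = lXF p (prF p x1 y) x2.
Proof. by move=> x1 y x2; rewrite rX_pr. Qed.
End Cross.
Definition RHS {dX dY : Order.disp_t}
  (X : bJoinSemilatticeType dX) (Y : bJoinSemilatticeType dY) : Prop :=
  exists (p : X -> Y -> X -> X) (q : Y -> X -> Y -> Y),
    [/\ trimor p /\ join_generated (fun t : X * Y * X => p t.1.1 t.1.2 t.2),
        trimor q /\ join_generated (fun t : Y * X * Y => q t.1.1 t.1.2 t.2),
        (forall (x1 x2 x3 : X) (y1 y2 : Y),
            p (p x1 y1 x2) y2 x3 = p x1 (q y1 x2 y2) x3
            /\ p x1 (q y1 x2 y2) x3 = p x1 y1 (p x2 y2 x3)),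
        (forall (x1 x2 : X) (y1 y2 y3 : Y),
            q (q y1 x1 y2) x2 y3 = q y1 (p x1 y2 x2) y3
            /\ q y1 (p x1 y2 x2) y3 = q y1 x1 (q y2 x2 y3)) &
     [/\ forall x1 x2 : X, (forall (u : X) (v : Y), p u v x1 = p u v x2) -> x1 = x2,
         forall x1 x2 : X, (forall (u : X) (v : Y), p x1 v u = p x2 v u) -> x1 = x2,
         forall y1 y2 : Y, (forall (v : Y) (u : X), q v u y1 = q v u y2) -> y1 = y2 &
         forall y1 y2 : Y, (forall (u : X) (v : Y), q y1 u v = q y2 u v) -> y1 = y2]].

Lemma forward (dX dY : Order.disp_t)
  (X : bJoinSemilatticeType dX) (Y : bJoinSemilatticeType dY) :
  morita_pair X Y -> RHS X Y.
Proof.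
move=> [dA [A [mulA [dB [B [mulB [lX [rX [lY [rY [pr [br]]]]]]]]]]]].
case=> _ _ [[[lXb lXm] lXg lXs] [[rXb rXm] rXg rXs] Xc]
  [[[lYb lYm] lYg lYs] [[rYb rYm] rYg rYs] Yc]
  [[prb [prl prr]] [brb [brl brr]] [c1 c2] [c3 c4] [gpr gbr]].
exists (fun x1 y x2 => rX x1 (br y x2)), (fun y1 x y2 => rY y1 (pr x y2)).
split.
- split.
    split; first by move=> y z; exact: rXb.1.
    split; first by move=> x z; exact: jmor_comp (rXb.2 x) (brb.1 z).
    by move=> x y; exact: jmor_comp (rXb.2 x) (brb.2 y).
  apply: (gen_trans _ _ rXg) => -[x b] /=.
  have [s ->] := gbr b.
  exists [seq (x, yx.1, yx.2) | yx <- s].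
  by rewrite (jmor_fjoin _ _ _ (rXb.2 x)) /fjoin big_map.
- split.
    split; first by move=> y z; exact: rYb.1.
    split; first by move=> x z; exact: jmor_comp (rYb.2 x) (prb.1 z).
    by move=> x y; exact: jmor_comp (rYb.2 x) (prb.2 y).
  apply: (gen_trans _ _ rYg) => -[y a] /=.
  have [s ->] := gpr a.
  exists [seq (y, xy.1, xy.2) | xy <- s].
  by rewrite (jmor_fjoin _ _ _ (rYb.2 y)) /fjoin big_map.
- move=> x1 x2 x3 y1 y2 /=.
  by split; rewrite ?(rXm) c2 -c3 // brr rXm.
- move=> x1 x2 y1 y2 y3 /=.
  by split; rewrite ?(rYm) c1 -c4 // prr rYm.
- split.
  + move=> x1 x2 H; apply: lXs => a.
    apply: (gen_ext _ (fun a => lX a x1) (fun a => lX a x2) gpr (lXb.1 x1) (lXb.1 x2)) => -[u v] /=.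
    by rewrite -!c3.
  + move=> x1 x2 H; apply: rXs => b.
    apply: (gen_ext _ (rX x1) (rX x2) gbr (rXb.2 x1) (rXb.2 x2)) => -[v u] /=.
    exact: H.
  + move=> y1 y2 H; apply: lYs => b.
    apply: (gen_ext _ (fun b => lY b y1) (fun b => lY b y2) gbr (lYb.1 y1) (lYb.1 y2)) => -[v u] /=.
    by rewrite -!c4.
  + move=> y1 y2 H; apply: rYs => a.
    apply: (gen_ext _ (rY y1) (rY y2) gpr (rYb.2 y1) (rYb.2 y2)) => -[u v] /=.
    exact: H.
Qed.

Lemma backward (dX dY : Order.disp_t)
  (X : bJoinSemilatticeType dX) (Y : bJoinSemilatticeType dY) :
  RHS X Y -> morita_pair X Y.
Proof.
move=> [p [q [[tp gp] [tq gq] hp hq [s3 s4 s5 s6]]]].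
have H : Hyps p q.
  exact: And5 (conj tp tq) (conj gp gq)
    (conj (fun x1 x2 x3 y1 y2 => (hp x1 x2 x3 y1 y2).1)
          (fun y1 y2 y3 x1 x2 => (hq x1 x2 y1 y2 y3).1))
    (conj (fun x1 x2 x3 y1 y2 => (hp x1 x2 x3 y1 y2).2)
          (fun y1 y2 y3 x1 x2 => (hq x1 x2 y1 y2 y3).2))
    (And4 s3 s4 s5 (fun y1 y2 h => s6 y1 y2 (fun u v => h v u))).
have H' := Hyps_swap _ _ H.
exists dX, (AA p), (mulF p), dY, (AA q), (mulF q), (lXF p), (rXF p q),
  (lXF q), (rXF q p), (prF p), (prF q).
split.
- exact: L1 H.
- exact: L1 H'.
- exact: L2 H.
- exact: L2 H'.
- have [h1 [h2 h3]] := L3 H; have [k1 [k2 k3]] := L3 H'.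
  split; [by split|by split|split; [exact: L4 H|exact: L4 H']
         |split; [exact: L5 H|exact: L5 H']|split; [exact: (@L6 _ _ _ _ p)|exact: (@L6 _ _ _ _ q)]].
Qed.

Theorem corollary1 (dX dY : Order.disp_t)
  (X : bJoinSemilatticeType dX) (Y : bJoinSemilatticeType dY) :
  morita_pair X Y <->
  exists (p : X -> Y -> X -> X) (q : Y -> X -> Y -> Y),
    [/\ trimor p /\ join_generated (fun t : X * Y * X => p t.1.1 t.1.2 t.2),
        trimor q /\ join_generated (fun t : Y * X * Y => q t.1.1 t.1.2 t.2),
        (forall (x1 x2 x3 : X) (y1 y2 : Y),
            p (p x1 y1 x2) y2 x3 = p x1 (q y1 x2 y2) x3
            /\ p x1 (q y1 x2 y2) x3 = p x1 y1 (p x2 y2 x3)),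
        (forall (x1 x2 : X) (y1 y2 y3 : Y),
            q (q y1 x1 y2) x2 y3 = q y1 (p x1 y2 x2) y3
            /\ q y1 (p x1 y2 x2) y3 = q y1 x1 (q y2 x2 y3)) &
     [/\ forall x1 x2 : X, (forall (u : X) (v : Y), p u v x1 = p u v x2) -> x1 = x2,
         forall x1 x2 : X, (forall (u : X) (v : Y), p x1 v u = p x2 v u) -> x1 = x2,
         forall y1 y2 : Y, (forall (v : Y) (u : X), q v u y1 = q v u y2) -> y1 = y2 &
         forall y1 y2 : Y, (forall (u : X) (v : Y), q y1 u v = q y2 u v) -> y1 = y2]].
Proof.
split; [exact: forward | exact: backward].
Qed.
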